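(* Let $\mathcal D_2(\lambda)$ be the distribution defined in the context, with $\lambda\in(0,\min(\alpha,\beta/(3d)))$. Then $\mathcal D_2(\lambda)$ is a $(\gamma,V)$-stable distribution for $V:=\mathbf X_1\setminus\{X_a\}$ and for every $\gamma>0$ with $\gamma\le\beta-3d\lambda$.
   Context: Entropies use the natural logarithm; $k$ is a fixed positive integer. For a finite set of discrete random variables $\mathbf Y$, a family is $\langle Y,\Pi\rangle$ with $Y\in\mathbf Y$, $\Pi\subseteq\mathbf Y\setminus\{Y\}$, $|\Pi|\le k$, $H(\langle Y,\Pi\rangle)=H(Y\mid\Pi)$; DAGs over $\mathbf Y$ with in-degree at most $k$ are identified with their sets of families, and a set $F$ of families has score $\mathcal S(F)=-\sum_{f\in F}H(f)$. Markov-equivalent DAGs (same conditional independence constraints) form equivalence classes (ECs) with a common score; an optimal EC maximizes the score. Construction. $\mathcal D_1$ is a distribution over a finite set $\mathbf X_1$ of at least $k$ discrete variables, containing a variable $X_a$, such that for some $\alpha,\beta>0$: (I) among DAGs over $\mathbf X_1$ with in-degree $\le k$, $\mathcal D_1$ has a unique optimal EC and the score difference between it and the next-best EC is at least $\beta$; (II) $X_a$ has no children in any structure of the optimal EC; (III) $H(X_a\mid\mathbf X_1\setminus\{X_a\})=\alpha$. Let $\mathbf X=\mathbf X_1\cup\{X_b\}$, $d=|\mathbf X|$. For $\lambda\in(0,\min(\alpha,\beta/(3d)))$, $\mathcal D_2(\lambda)$ is a distribution on $\mathbf X$ whose marginal on $\mathbf X_1$ is $\mathcal D_1$ and: (IV)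 there is a hidden Bernoulli variable $C$ independent of $\mathbf X_1$ with $P[X_b=X_a\mid C=1]=1$ and $X_b$ independent of $\mathbf X_1$ given $C=0$; (V) $P(C=1)$ is such that $\max(H(X_b\mid X_a),H(X_a\mid X_b))=\lambda$. $(\gamma,V)$-stable: with $\mathcal G_{d,k}$ the DAGs over $\mathbf X$ with in-degree $\le k$ and $\mathcal S^*=\max_{G\in\mathcal G_{d,k}}\mathcal S(G)$, for $\gamma>0$ and $V\subseteq\mathbf X$ a distribution is $(\gamma,V)$-stable if (1) in every $G\in\mathcal G_{d,k}$ with $\mathcal S(G)\ge\mathcal S^*-\gamma$ all parents of every variable in $V$ are in $V$; (2) for the marginal on $V$ (over DAGs on $V$ with in-degree $\le k$) there is a unique optimal EC and the score gap between the best and second-best EC is more than $\gamma$. *)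

(* Defs.v *)
From HB Require Import structures.
From mathcomp Require Import all_boot all_order all_algebra.
From mathcomp Require Import reals exp.
Set Implicit Arguments. Unset Strict Implicit. Unset Printing Implicit Defensive.
Import Order.TTheory GRing.Theory Num.Theory.
Local Open Scope ring_scope.

Section Defs.
Variable R : realType.

(* A joint distribution of finitely many discrete random variables indexed by
   the finite type [Var] is given by a finite sample space [Om], a probability
   mass function [P] on it, and random variables [X v : Om -> T]. *)
Variables (Om : finType) (Var : finType) (T : eqType).

Definition is_pmf (P : Om -> R) : Prop :=
  (forall w, 0 <= P w) /\ \sum_(w : Om) P w = 1.

Definition Pr (P : Om -> R) (A : pred Om) : R := \sum_(w : Om | A w) P w.

Definition agree (X : Var -> Om -> T) (S : {set Var}) (w w' : Om) : bool :=
  [forall v in S, X v w == X v w'].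

Definition Hent (P : Om -> R) (X : Var -> Om -> T) (S : {set Var}) : R :=
  - \sum_(w : Om) P w * ln (Pr P (agree X S w)).

Definition condH (P : Om -> R) (X : Var -> Om -> T) (y : Var)
  (Pi : {set Var}) : R :=
  Hent P X (y |: Pi) - Hent P X Pi.

(* A DAG over the set of variables S is given by its parent-set function
   [pa]; it is identified with its set of families <v, pa v>, v in S. *)
Definition parent_rel (pa : {ffun Var -> {set Var}}) : rel Var :=
  [rel u v | u \in pa v].

Definition is_dag (k : nat) (S : {set Var}) (pa : {ffun Var -> {set Var}})
  : Prop :=
  [/\ forall v, v \in S -> pa v \subset S :\ v,
      forall v, v \in S -> #|pa v| <= k,
      forall v, v \notin S -> pa v = set0 &
      forall u v, u \in pa v -> ~~ connect (parent_rel pa) v u]%N.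

Definition score (P : Om -> R) (X : Var -> Om -> T) (S : {set Var})
  (pa : {ffun Var -> {set Var}}) : R :=
  - \sum_(v in S) condH P X v (pa v).

Definition adj (pa : {ffun Var -> {set Var}}) : rel Var :=
  [rel u v | (u \in pa v) || (v \in pa u)].

Definition collider (pa : {ffun Var -> {set Var}}) (u w z : Var) : bool :=
  (u \in pa w) && (z \in pa w).

Definition desc_in (pa : {ffun Var -> {set Var}}) (w : Var) (Z : {set Var})
  : bool :=
  [exists z in Z, connect (parent_rel pa) w z].

Definition active_trail (pa : {ffun Var -> {set Var}}) (Z : {set Var})
  (x y : Var) (p : seq Var) : bool :=
  [&& p != [::], uniq (x :: p), last x p == y, path (adj pa) x p &
      all (fun i =>
             let u := nth x (x :: p) i in
             let w := nth x (x :: p) i.+1 in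
             let z := nth x (x :: p) i.+2 in
             if collider pa u w z then desc_in pa w Z else w \notin Z)
          (iota 0 (size p).-1)].

Definition dsep (pa : {ffun Var -> {set Var}}) (x y : Var) (Z : {set Var})
  : Prop :=
  ~ exists p : seq Var, active_trail pa Z x y p.

(* Markov equivalence over S: the two DAGs encode the same conditional
   independence constraints (same d-separation statements). *)
Definition markov_equiv (S : {set Var}) (pa1 pa2 : {ffun Var -> {set Var}})
  : Prop :=
  forall (x y : Var) (Z : {set Var}),
    x \in S -> y \in S -> x != y -> Z \subset S :\: [set x; y] ->
    (dsep pa1 x y Z <-> dsep pa2 x y Z).

Definition stable (k : nat) (P : Om -> R) (X : Var -> Om -> T) (gamma : R)
  (V : {set Var}) : Prop :=
  (* (1) with S* the maximal score over all DAGs over the whole variable set *)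
  (forall pa, is_dag k setT pa ->
     (forall pa', is_dag k setT pa' -> score P X setT pa' - gamma <=
                                      score P X setT pa) ->
     forall v, v \in V -> pa v \subset V)
  /\
  (* (2) unique optimal EC for the marginal on V, gap more than gamma *)
  (exists pa0, is_dag k V pa0 /\
     (forall pa, is_dag k V pa -> score P X V pa <= score P X V pa0) /\
     (forall pa, is_dag k V pa -> ~ markov_equiv V pa0 pa ->
        score P X V pa < score P X V pa0 - gamma)).

End Defs.

(* Main.v *)
Require Import Defs.
From HB Require Import structures.
From mathcomp Require Import all_boot all_order all_algebra.
From mathcomp Require Import reals exp.
From mathcomp Require Import ring lra zify.
Set Implicit Arguments. Unset Strict Implicit. Unset Printing Implicit Defensive.
Import Order.TTheory GRing.Theory Num.Theory.
Local Open Scope ring_scope.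

Section Ent.
Variable R : realType.
Variables (Om : finType) (Var : finType) (T : eqType).
Variables (P : Om -> R) (X : Var -> Om -> T).
Hypothesis hP : is_pmf P.

Lemma P_ge0 w : 0 <= P w. Proof. by case: hP. Qed.

Lemma agree_refl (S : {set Var}) w : agree X S w w.
Proof. by apply/forallP => v; apply/implyP. Qed.

Lemma agree_sym (S : {set Var}) w w' : agree X S w w' = agree X S w' w.
Proof.
by apply/forallP/forallP => H v; apply/implyP => hv;
  move/implyP: (H v) => /(_ hv) /eqP ->.
Qed.

Lemma agree_trans (S : {set Var}) w1 w2 w3 : agree X S w1 w2 -> agree X S w2 w3 -> agree X S w1 w3.
Proof.
move=> /forallP H1 /forallP H2; apply/forallP => v; apply/implyP => hv.
by move/implyP: (H1 v) => /(_ hv) /eqP ->; move/implyP: (H2 v) => /(_ hv).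
Qed.

Lemma agree_sub (S S' : {set Var}) w w' : S \subset S' -> agree X S' w w' -> agree X S w w'.
Proof.
move=> /subsetP sS /forallP H; apply/forallP => v; apply/implyP => hv.
by move/implyP: (H v) => /(_ (sS v hv)).
Qed.

Lemma agreeU (S S' : {set Var}) w w' : agree X (S :|: S') w w' = agree X S w w' && agree X S' w w'.
Proof.
apply/idP/andP.
  by move=> H; split; apply: agree_sub H; [apply: subsetUl | apply: subsetUr].
case=> /forallP H1 /forallP H2; apply/forallP => v; apply/implyP; rewrite inE => /orP [] hv.
  by move/implyP: (H1 v) => /(_ hv).
by move/implyP: (H2 v) => /(_ hv).
Qed.

Lemma Pr_ge0 A : 0 <= Pr P A.
Proof. by apply: sumr_ge0 => w _; apply: P_ge0. Qed.

Lemma Pr_geP (S : {set Var}) w : P w <= Pr P (agree X S w).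
Proof.
rewrite /Pr (bigD1 w) ?agree_refl //= lerDl.
by apply: sumr_ge0 => ? _; apply: P_ge0.
Qed.

Lemma Pr_sub (A B : pred Om) : (forall w, A w -> B w) -> Pr P A <= Pr P B.
Proof.
move=> AB; rewrite /Pr [X in _ <= X](bigID A) /=.
rewrite (eq_bigl A); last by move=> w; case: (boolP (A w)) => [hA|_]; [rewrite AB | rewrite andbF].
by rewrite lerDl; apply: sumr_ge0 => ? _; apply: P_ge0.
Qed.

Lemma Pr_agree_eq (S : {set Var}) w w' : agree X S w w' ->
  Pr P (agree X S w) = Pr P (agree X S w').
Proof.
move=> h; apply: eq_bigl => u; apply/idP/idP => h2.
  by apply: agree_trans h2; rewrite agree_sym.
by apply: agree_trans h2.
Qed.

Lemma Hent_mono (S S' : {set Var}) : S \subset S' -> Hent P X S <= Hent P X S'.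
Proof.
move=> sS; rewrite /Hent lerN2; apply: ler_sum => w _.
have [->|Pw] := eqVneq (P w) 0; first by rewrite !mul0r.
have Pw0 : 0 < P w by rewrite lt0r Pw P_ge0.
apply: ler_wpM2l; first exact: P_ge0.
have h1 : 0 < Pr P (agree X S' w) by apply: lt_le_trans Pw0 (Pr_geP _ _).
have h2 : 0 < Pr P (agree X S w) by apply: lt_le_trans Pw0 (Pr_geP _ _).
rewrite ler_ln ?posrE //; apply: Pr_sub => u; exact: agree_sub.
Qed.

Lemma condH_ge0 v (S : {set Var}) : 0 <= condH P X v S.
Proof. by rewrite /condH subr_ge0; apply: Hent_mono; apply: subsetUr. Qed.

Definition ind (b : bool) : R := if b then 1 else 0.

Lemma ind_ge0 b : 0 <= ind b. Proof. by case: b; rewrite /ind. Qed.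

Lemma PrE (A : pred Om) : Pr P A = \sum_w ind (A w) * P w.
Proof.
rewrite /Pr big_mkcond; apply: eq_bigr => w _.
by rewrite /ind; case: (A w); rewrite ?mul1r ?mul0r.
Qed.

Lemma Pr_agree_pos (S : {set Var}) w : P w != 0 -> 0 < Pr P (agree X S w).
Proof.
move=> Pw; apply: lt_le_trans (Pr_geP _ _).
by rewrite lt0r Pw P_ge0.
Qed.

Lemma inner_bound (S S' U : {set Var}) w1 w2 : S \subset S' ->
  \sum_w ind (agree X S' w w1 && agree X (S :|: U) w w2) *
     (P w / (Pr P (agree X S w) * Pr P (agree X (S' :|: U) w)))
  <= ind (agree X S w1 w2) / Pr P (agree X S w1).
Proof.
move=> sS.
have sSU : S \subset S :|: U by apply: subsetUl.
have sUSU : U \subset S :|: U by apply: subsetUr.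
case: (boolP (agree X S w1 w2)) => h12; last first.
  rewrite big1 /ind ?mul0r // => w _.
  case: (boolP (agree X S' w w1 && agree X (S :|: U) w w2)) => [/andP [h1 h2]|_];
    last by rewrite mul0r.
  case/negP: h12; apply: (@agree_trans _ _ w); first by rewrite agree_sym; apply: agree_sub h1.
  exact: agree_sub h2.
case: (pickP (fun w => agree X S' w w1 && agree X (S :|: U) w w2)) => [w0 /andP [h01 h02]|hnone];
  last first.
  rewrite big1; first by rewrite /ind mul1r invr_ge0 Pr_ge0.
  by move=> w _; rewrite hnone /ind mul0r.
set A := Pr P (agree X S w1).
set D := Pr P (agree X (S' :|: U) w0).
have eqt : forall w, ind (agree X S' w w1 && agree X (S :|: U) w w2) *
     (P w / (Pr P (agree X S w) * Pr P (agree X (S' :|: U) w))) =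
     ind (agree X S' w w1 && agree X (S :|: U) w w2) * P w / (A * D).
  move=> w; case: (boolP (agree X S' w w1 && agree X (S :|: U) w w2)) => [/andP [h1 h2]|_];
    last by rewrite /ind !mul0r.
  rewrite /ind !mul1r /A /D; congr (P w / (_ * _)).
    by apply: Pr_agree_eq; apply: agree_sub h1.
  apply: Pr_agree_eq; rewrite agreeU; apply/andP; split.
    by apply: (agree_trans h1); rewrite agree_sym.
  apply: (@agree_trans _ _ w2); first exact: agree_sub h2.
  by rewrite agree_sym; apply: agree_sub h02.
rewrite (eq_bigr _ (fun w _ => eqt w)) -mulr_suml.
have hx : \sum_w ind (agree X S' w w1 && agree X (S :|: U) w w2) * P w <= D.
  rewrite /D PrE; apply: ler_sum => w _; apply: ler_wpM2r; first exact: P_ge0.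
  case: (boolP (agree X S' w w1 && agree X (S :|: U) w w2)) => [/andP [h1 h2]|_];
    last exact: ind_ge0.
  suff -> : agree X (S' :|: U) w0 w by rewrite /ind.
  rewrite agree_sym agreeU; apply/andP; split.
    by apply: (agree_trans h1); rewrite agree_sym.
  apply: (@agree_trans _ _ w2); first exact: agree_sub h2.
  by rewrite agree_sym; apply: agree_sub h02.
have A0 : 0 <= A by apply: Pr_ge0.
have D0 : 0 <= D by apply: Pr_ge0.
set x := \sum_w _ in hx *.
rewrite /ind mul1r.
have [->|Dn0] := eqVneq D 0; first by rewrite mulr0 invr0 mulr0 invr_ge0.
apply: (@le_trans _ _ (D / (A * D))).
  by apply: ler_wpM2r => //; rewrite invr_ge0 mulr_ge0.
rewrite invfM mulrCA mulfV // mulr1 //.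
Qed.

Lemma key_sum (S S' U : {set Var}) : S \subset S' ->
  \sum_w P w * (Pr P (agree X (S :|: U) w) * Pr P (agree X S' w) /
       (Pr P (agree X S w) * Pr P (agree X (S' :|: U) w))) <= 1.
Proof.
move=> sS.
set F := fun w => P w / (Pr P (agree X S w) * Pr P (agree X (S' :|: U) w)).
have e1 : forall w, P w * (Pr P (agree X (S :|: U) w) * Pr P (agree X S' w) /
       (Pr P (agree X S w) * Pr P (agree X (S' :|: U) w))) =
   \sum_w1 \sum_w2 P w1 * P w2 *
      (ind (agree X S' w w1 && agree X (S :|: U) w w2) * F w).
  move=> w.
  have -> : P w * (Pr P (agree X (S :|: U) w) * Pr P (agree X S' w) /
       (Pr P (agree X S w) * Pr P (agree X (S' :|: U) w))) =
       F w * (Pr P (agree X S' w) * Pr P (agree X (S :|: U) w)) by rewrite /F; ring.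
  rewrite [Pr _ (agree X (S :|: U) w)]PrE [Pr _ (agree X S' w)]PrE.
  rewrite big_distrlr /= mulr_sumr; apply: eq_bigr => w1 _.
  rewrite mulr_sumr; apply: eq_bigr => w2 _.
  rewrite /F /ind; case: (agree X S' w w1); case: (agree X (S :|: U) w w2) => /=;
    rewrite ?mul0r ?mulr0 ?mul1r //; ring.
rewrite (eq_bigr _ (fun w _ => e1 w)).
rewrite exchange_big /=.
have e2 : forall w1, \sum_w \sum_w2 P w1 * P w2 *
      (ind (agree X S' w w1 && agree X (S :|: U) w w2) * F w) =
   \sum_w2 P w1 * P w2 * \sum_w ind (agree X S' w w1 && agree X (S :|: U) w w2) * F w.
  move=> w1; rewrite exchange_big /=; apply: eq_bigr => w2 _.
  by rewrite mulr_sumr; apply: eq_bigr => w _; rewrite mulrA.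
rewrite (eq_bigr _ (fun w _ => e2 w)).
apply: (@le_trans _ _ (\sum_w1 \sum_w2 P w1 * P w2 *
       (ind (agree X S w1 w2) / Pr P (agree X S w1)))).
  apply: ler_sum => w1 _; apply: ler_sum => w2 _.
  apply: ler_wpM2l; first by rewrite mulr_ge0 ?P_ge0.
  exact: inner_bound.
have e3 : forall w1, \sum_w2 P w1 * P w2 *
       (ind (agree X S w1 w2) / Pr P (agree X S w1)) =
       P w1 * (Pr P (agree X S w1) / Pr P (agree X S w1)).
  move=> w1; rewrite [Pr _ (agree X S w1) / _]mulrC PrE mulr_sumr mulr_sumr.
  by apply: eq_bigr => w2 _; rewrite /ind; case: (agree X S w1 w2); rewrite ?mul0r ?mulr0 ?mul1r //; ring.
rewrite (eq_bigr _ (fun w _ => e3 w)).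
case: hP => _ <-; apply: ler_sum => w _.
rewrite -[X in _ <= X]mulr1; apply: ler_wpM2l; first exact: P_ge0.
have [->|hn] := eqVneq (Pr P (agree X S w)) 0; first by rewrite mul0r.
by rewrite mulfV.
Qed.

Lemma ln_le_sub1 (x : R) : 0 < x -> ln x <= x - 1.
Proof.
move=> x0; have h : -1 < x - 1 by rewrite ltrBrDl subrr.
by have := le_ln1Dx h; rewrite addrC subrK.
Qed.

Lemma Hent_submod (S S' U : {set Var}) : S \subset S' ->
  Hent P X (S' :|: U) - Hent P X S' <= Hent P X (S :|: U) - Hent P X S.
Proof.
move=> sS.
set a := fun w => Pr P (agree X S w).
set bb := fun w => Pr P (agree X (S :|: U) w).
set c := fun w => Pr P (agree X S' w).
set dd := fun w => Pr P (agree X (S' :|: U) w).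
rewrite -subr_le0.
have -> : Hent P X (S' :|: U) - Hent P X S' - (Hent P X (S :|: U) - Hent P X S) =
  \sum_w P w * (ln (bb w) + ln (c w) - ln (a w) - ln (dd w)).
  rewrite /Hent /a /bb /c /dd.
  rewrite [in RHS](eq_bigr (fun w => P w * ln (Pr P (agree X (S :|: U) w)) +
      P w * ln (Pr P (agree X S' w)) + - (P w * ln (Pr P (agree X S w))) +
      - (P w * ln (Pr P (agree X (S' :|: U) w))))); last by move=> w _; ring.
  rewrite !big_split /= !sumrN. ring.
apply: (@le_trans _ _ (\sum_w P w * (bb w * c w / (a w * dd w) - 1))).
  apply: ler_sum => w _.
  have [->|Pw] := eqVneq (P w) 0; first by rewrite !mul0r.
  apply: ler_wpM2l; first exact: P_ge0.
  have ha : 0 < a w by apply: Pr_agree_pos.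
  have hb : 0 < bb w by apply: Pr_agree_pos.
  have hc : 0 < c w by apply: Pr_agree_pos.
  have hd : 0 < dd w by apply: Pr_agree_pos.
  have -> : ln (bb w) + ln (c w) - ln (a w) - ln (dd w) = ln (bb w * c w / (a w * dd w)).
    rewrite ln_div ?posrE ?mulr_gt0 // !lnM ?posrE //; ring.
  by apply: ln_le_sub1; rewrite divr_gt0 ?mulr_gt0.
rewrite (eq_bigr (fun w => P w * (bb w * c w / (a w * dd w)) - P w)); last first.
  by move=> w _; ring.
rewrite sumrB; case: hP => _ ->; rewrite subr_le0.
exact: key_sum.
Qed.

Lemma CR v (Pi A : {set Var}) : Pi \subset A -> condH P X v A <= condH P X v Pi.
Proof.
move=> sPA; rewrite /condH.
by have := Hent_submod [set v] sPA; rewrite !(setUC _ [set v]).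
Qed.

Lemma E0 v a b (A : {set Var}) : a \in A ->
  condH P X v A <= condH P X v (b |: A) + condH P X b [set a].
Proof.
move=> aA; rewrite /condH.
have h1 : Hent P X (v |: A) <= Hent P X (v |: (b |: A)).
  by apply: Hent_mono; rewrite setUCA subsetUr.
have h2 : Hent P X (b |: A) - Hent P X A <= Hent P X (b |: [set a]) - Hent P X [set a].
  have := Hent_submod [set b] (_ : [set a] \subset A); rewrite !(setUC _ [set b]); apply.
  by rewrite sub1set.
lra.
Qed.

Lemma Ea a b (Pi : {set Var}) :
  condH P X a Pi <= condH P X b Pi + condH P X a [set b].
Proof.
have h0 := CR a (_ : [set b] \subset b |: Pi).
have h0' : condH P X a (b |: Pi) <= condH P X a [set b].
  by apply: CR; rewrite sub1set setU11.
move: h0'; rewrite /condH => h0'.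
have h1 : Hent P X (a |: Pi) <= Hent P X (a |: (b |: Pi)).
  by apply: Hent_mono; rewrite setUCA subsetUr.
lra.
Qed.

End Ent.

Section Graph.
Variable Var : finType.
Implicit Types e : rel Var.

Lemma connect_ind_gen e (Q : Var -> Var -> Prop) :
  (forall x, Q x x) -> (forall x z y, e x z -> connect e z y -> Q z y -> Q x y) ->
  forall x y, connect e x y -> Q x y.
Proof.
move=> H0 HS x y /connectP [p]; elim: p x => [|z p IH] x /=.
  by move=> _ ->.
case/andP => exz pz ey; apply: (HS x z y exz); last exact: IH.
by apply/connectP; exists p.
Qed.

Lemma conn_closed e (Q : pred Var) x y :
  (forall u v, Q u -> e u v -> Q v) -> Q x -> connect e x y -> Q y.
Proof.
move=> HQ Qx c; move: c Qx; apply: (@connect_ind_gen e (fun x y => Q x -> Q y)) => //.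
by move=> x' z y' exz _ IH Qx'; apply: IH; apply: HQ exz.
Qed.

Lemma conn_or e e' (Q : pred Var) x y :
  (forall u v, e' u v -> e u v \/ Q v) -> (forall u v, Q u -> e u v -> Q v) ->
  connect e' x y -> connect e x y \/ Q y.
Proof.
move=> H1 H2.
have HQ : forall u v, Q u -> e' u v -> Q v.
  by move=> u v Qu /H1 [/(H2 _ _ Qu)|].
apply: (@connect_ind_gen e' (fun x y => connect e x y \/ Q y)).
  by move=> z; left; apply: connect0.
move=> x' z y' exz czy [czy'|Qy]; last by right.
case: (H1 _ _ exz) => [exz'|Qz]; first by left; apply: connect_trans (connect1 exz') czy'.
by right; apply: conn_closed HQ Qz czy.
Qed.

Lemma conn_sub_Q e e' (Q : pred Var) x y :
  (forall u v, Q u -> e' u v -> e u v) -> (forall u v, Q u -> e u v -> Q v) ->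
  Q x -> connect e' x y -> connect e x y.
Proof.
move=> H1 H2 Qx c; move: c Qx.
apply: (@connect_ind_gen e' (fun x y => Q x -> connect e x y)).
  by move=> z _; apply: connect0.
move=> x' z y' exz _ IH Qx'.
have e1 := H1 _ _ Qx' exz.
by apply: connect_trans (connect1 e1) (IH (H2 _ _ Qx' e1)).
Qed.

Lemma conn_map e e' (f : Var -> Var) x y :
  (forall u v, e' u v -> connect e (f u) (f v)) -> connect e' x y -> connect e (f x) (f y).
Proof.
move=> H; apply: (@connect_ind_gen e' (fun x y => connect e (f x) (f y))).
  by move=> z; apply: connect0.
by move=> x' z y' exz _ IH; apply: connect_trans (H _ _ exz) IH.
Qed.

Lemma conn_from_sink e s z : (forall v, ~~ e s v) -> connect e s z -> z = s.
Proof.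
move=> Hs /connectP [[|y p] /=]; first by move=> _ ->.
by case/andP => /negP; rewrite (negPf (Hs y)).
Qed.

Lemma conn_sink1 e e' s x z : (forall u v, v != s -> e u v = e' u v) ->
  (forall v, ~~ e s v) -> z != s -> connect e x z -> connect e' x z.
Proof.
move=> Heq Hs zs /connectP [p]; elim: p x => [|y p IH] x /=.
  by move=> _ ->; apply: connect0.
case/andP => exy py ez.
have ys : y != s.
  apply/eqP => ys; subst y; case: p py ez IH => [|y' p'] /=; first by move=> _ ez; rewrite ez eqxx in zs.
  by rewrite (negPf (Hs y')).
by apply: connect_trans (connect1 _) (IH y py ez); rewrite -Heq.
Qed.

Lemma conn_sink e e' s x z : (forall u v, v != s -> e u v = e' u v) ->
  (forall v, ~~ e s v) -> (forall v, ~~ e' s v) -> z != s ->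
  connect e x z = connect e' x z.
Proof.
move=> Heq Hs Hs' zs; apply/idP/idP; first exact: (conn_sink1 Heq Hs zs).
by apply: (@conn_sink1 e' e s x z _ Hs' zs) => u v vs; rewrite Heq.
Qed.

End Graph.

Section Dsep.
Variable Var : finType.
Implicit Types pa : {ffun Var -> {set Var}}.

Lemma path_avoid (r : rel Var) s x p : path r x p -> p != [::] ->
  (forall u, ~~ r u s) -> (forall u, ~~ r s u) -> s \notin x :: p.
Proof.
elim: p x => [//|y p IH] x /= /andP [rxy py] _ H1 H2.
rewrite in_cons negb_or; apply/andP; split.
  by apply/eqP => xs; subst x; rewrite (negPf (H2 y)) in rxy.
case: p IH py => [|z p] IH py.
  by rewrite mem_seq1; apply/eqP => ys; subst y; rewrite (negPf (H1 x)) in rxy.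
exact: IH.
Qed.

Lemma nth_in_cons (x : Var) p j : nth x (x :: p) j \in x :: p.
Proof.
case: (ltnP j (size (x :: p))) => hj; first exact: mem_nth.
by rewrite nth_default // mem_head.
Qed.

Section Sink.
Variables (pa pa' : {ffun Var -> {set Var}}) (s : Var).
Hypotheses (Heq : forall v, v != s -> pa v = pa' v) (Hs : pa s = set0)
  (Hs' : forall v, s \notin pa' v).

Lemma Hsp v : s \notin pa v.
Proof. by case: (eqVneq v s) => [->|/Heq ->]; rewrite ?Hs ?inE. Qed.

Lemma conn_pa x z : z != s ->
  connect (parent_rel pa) x z = connect (parent_rel pa') x z.
Proof.
move=> zs; apply: conn_sink zs.
- by move=> u v vs; rewrite /parent_rel /= Heq.
- by move=> v; rewrite /parent_rel /= Hsp.
- by move=> v; rewrite /parent_rel /= Hs'.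
Qed.

Lemma avoid_pa (Z : {set Var}) x y (p : seq Var) : active_trail pa Z x y p -> s \notin x :: p.
Proof.
case/and5P => pn _ _ pth _; apply: (path_avoid pth pn).
  by move=> u; rewrite /adj /= Hs inE (negPf (Hsp _)).
by move=> u; rewrite /adj /= Hs inE (negPf (Hsp _)).
Qed.

Lemma avoid_pa' (Z : {set Var}) x y (p : seq Var) : x != s -> y != s -> s \notin Z ->
  active_trail pa' Z x y p -> s \notin x :: p.
Proof.
move=> xs ys sZ /and5P [pn _ /eqP ly pth /allP hall].
apply/negP => sin.
set j := index s (x :: p).
have hj : nth x (x :: p) j = s by apply: nth_index.
have jlt : (j < (size p).+1)%N by rewrite -[(size p).+1]/(size (x :: p)) index_mem.
have j0 : j != 0%N by apply/eqP => j0; rewrite j0 /= in hj; rewrite hj eqxx in xs.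
have jn : j != size p.
  apply/eqP => jn; move: hj; rewrite jn.
  have := nth_last x (x :: p); rewrite /= => ->; rewrite ly => ys'.
  by rewrite ys' eqxx in ys.
have [i ji] : exists i, j = i.+1 by exists j.-1; rewrite prednK // lt0n.
have iin : i \in iota 0 (size p).-1 by rewrite mem_iota add0n; lia.
have hj' : nth x p i = s by move: hj; rewrite ji.
have := hall _ iin; rewrite /= hj'.
move/pathP: pth => /(_ x) hp.
have a1 := hp i (ltac:(lia)).
have a2 := hp j (ltac:(lia)).
move: a1 a2; rewrite /= hj' {1}ji /= hj'.
rewrite /adj /= !(negPf (Hs' _)) /= orbF => u1 z1.
rewrite ji in z1; rewrite /collider u1 z1 /= => /existsP [z /andP [zZ cz]].
have := conn_from_sink (_ : forall v, ~~ parent_rel pa' s v) cz.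
move=> /(_ (fun v => Hs' v)) zs; subst z.
by rewrite zZ in sZ.
Qed.

Lemma at_eq (Z : {set Var}) x y (p : seq Var) : s \notin x :: p -> s \notin Z ->
  active_trail pa Z x y p = active_trail pa' Z x y p.
Proof.
move=> sp sZ.
have nth_ne : forall i, nth x (x :: p) i != s.
  by move=> i; apply/eqP => h; move: (nth_in_cons x p i); rewrite h (negPf sp).
rewrite /active_trail; congr [&& _, _, _, _ & _].
  apply: (@eq_in_path _ (predC1 s)).
    move=> u v; rewrite !inE => us vs; rewrite /adj /= !Heq //.
  by apply/allP => z zin; rewrite inE; apply/eqP => zs; rewrite -zs zin in sp.
apply: eq_all => i /=.
have hw := nth_ne i.+1.
rewrite /collider !Heq //.
case: ifP => _ //; rewrite /desc_in; apply: eq_existsb => z.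
case: (boolP (z \in Z)) => zZ //=.
by apply: conn_pa; apply/eqP => zs; rewrite -zs zZ in sZ.
Qed.

Lemma dsep_sink (Z : {set Var}) x y : x != s -> y != s -> s \notin Z ->
  (dsep pa x y Z <-> dsep pa' x y Z).
Proof.
move=> xs ys sZ; rewrite /dsep; split => H [p hp]; apply: H; exists p.
  by rewrite at_eq //; apply: avoid_pa' hp.
by rewrite -at_eq //; apply: avoid_pa hp.
Qed.

End Sink.
End Dsep.

From Stdlib Require Import Classical_Prop.

Section Part2.
Variable R : realType.
Variables (Om : finType) (Var : finType) (T : eqType).
Variables (P : Om -> R) (X : Var -> Om -> T).
Variables (k : nat) (a b : Var) (pa1 : {ffun Var -> {set Var}}) (beta gamma : R).
Let X1 := [set: Var] :\ b.
Let V := X1 :\ a.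
Hypotheses (aX1 : a \in X1) (dag1 : is_dag k X1 pa1)
  (opt1 : forall pa, is_dag k X1 pa -> score P X X1 pa <= score P X X1 pa1)
  (gap1 : forall pa, is_dag k X1 pa -> ~ markov_equiv X1 pa1 pa ->
        score P X X1 pa <= score P X X1 pa1 - beta)
  (nochild : forall pa, is_dag k X1 pa -> markov_equiv X1 pa1 pa ->
        forall v, a \notin pa v)
  (gb : gamma < beta).

Lemma meq_refl (S : {set Var}) pa : markov_equiv S pa pa.
Proof. by move=> *; split. Qed.

Lemma a_nc1 v : a \notin pa1 v.
Proof. exact: (nochild dag1 (@meq_refl X1 pa1)). Qed.

Definition plus (H : {ffun Var -> {set Var}}) : {ffun Var -> {set Var}} :=
  [ffun v => if v == a then pa1 a else H v].
Definition pa0 : {ffun Var -> {set Var}} := [ffun v => if v == a then set0 else pa1 v].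

Lemma score_plus H : score P X X1 (plus H) = score P X V H - condH P X a (pa1 a).
Proof.
rewrite /score (bigD1 a) //= ffunE eqxx.
have -> : \sum_(i in X1 | i != a) condH P X i (plus H i) = \sum_(v in V) condH P X v (H v).
  apply: eq_big => v; first by rewrite /V in_setD1 andbC.
  by move=> /andP [_ va]; rewrite /plus /pa0 ffunE (negPf va).
by rewrite opprD addrC.
Qed.

Lemma plus_pa0 : plus pa0 = pa1.
Proof. by apply/ffunP => v; rewrite !ffunE; case: eqP => // ->. Qed.

Lemma dag_pa0 : is_dag k V pa0.
Proof.
case: dag1 => d1 d2 d3 d4; split.
- move=> v; rewrite /V in_setD1 => /andP [va vX]; rewrite /plus /pa0 ffunE (negPf va).
  apply/subsetP => u hu; have := subsetP (d1 v vX) u hu.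
  rewrite !in_setD1 => /andP [-> ->]; rewrite andbT.
  by apply/eqP => ua; subst u; rewrite (negPf (a_nc1 v)) in hu.
- move=> v; rewrite /V in_setD1 => /andP [va vX]; rewrite /plus /pa0 ffunE (negPf va); exact: d2.
- move=> v; rewrite /V in_setD1 negb_and negbK => /orP [/eqP ->|vX].
    by rewrite /plus /pa0 ffunE eqxx.
  by rewrite /plus /pa0 ffunE; case: eqP => // _; apply: d3.
- move=> u v; rewrite /plus /pa0 ffunE; case: eqP => [_|/eqP va]; first by rewrite inE.
  move=> hu; have ua : u != a by apply/eqP => ua; subst u; rewrite (negPf (a_nc1 v)) in hu.
  rewrite (@conn_pa _ pa0 pa1 a) //; first exact: d4.
  + by move=> w wa; rewrite /plus /pa0 ffunE (negPf wa).
  + by rewrite /plus /pa0 ffunE eqxx.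
  + exact: a_nc1.
Qed.

Lemma dag_plus H : is_dag k V H -> is_dag k X1 (plus H).
Proof.
case=> h1 h2 h3 h4; case: dag1 => d1 d2 d3 d4.
have HaV : forall v, a \notin H v.
  move=> v; case: (boolP (v \in V)) => vV; last by rewrite h3 // inE.
  by apply/negP => /(subsetP (h1 v vV)); rewrite !in_setD1 eqxx andbF.
have Ha : H a = set0 by apply: h3; rewrite /V in_setD1 eqxx.
have Hs' : forall v, a \notin plus H v.
  by move=> v; rewrite /plus /pa0 ffunE; case: eqP => _; [apply: a_nc1 | apply: HaV].
split.
- move=> v vX; rewrite /plus /pa0 ffunE; case: (eqVneq v a) => [->|va]; first exact: d1.
  have vV : v \in V by rewrite /V in_setD1 va.
  apply: subset_trans (h1 v vV) _; apply: setSD; rewrite /V; apply: subD1set.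
- move=> v vX; rewrite /plus ffunE; case: (eqVneq v a) => [_|va]; first exact: d2 aX1.
  by apply: h2; rewrite /V in_setD1 va.
- move=> v vX; rewrite /plus /pa0 ffunE; case: (eqVneq v a) => [va|_]; first by subst v; rewrite aX1 in vX.
  by apply: h3; rewrite /V in_setD1 (negPf vX) andbF.
- move=> u v; rewrite /plus /pa0 ffunE; case: (eqVneq v a) => [->|va] hu.
    apply/negP => /(conn_from_sink (fun w => Hs' w)) ua; subst u.
    by rewrite (negPf (a_nc1 a)) in hu.
  have ua : u != a by apply/eqP => ua; subst u; rewrite (negPf (HaV v)) in hu.
  rewrite -(@conn_pa _ H (plus H) a) //; first exact: h4.
  by move=> w wa; rewrite /plus /pa0 ffunE (negPf wa).
Qed.

Lemma meq_plus H : is_dag k V H -> markov_equiv X1 pa1 (plus H) -> markov_equiv V pa0 H.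
Proof.
move=> dH hme x y Z; rewrite /V => /setD1P [xa xX] /setD1P [ya yX] xy sZ.
have sZ' : Z \subset X1 :\: [set x; y].
  apply: subset_trans sZ _; apply: setSD; apply: subD1set.
have aZ : a \notin Z.
  by apply/negP => /(subsetP sZ); rewrite !inE eqxx /= andbF.
case: dH => h1 h2 h3 h4.
have HaV : forall v, a \notin H v.
  move=> v; case: (boolP (v \in V)) => vV; last by rewrite h3 // inE.
  by apply/negP => /(subsetP (h1 v vV)); rewrite !in_setD1 eqxx andbF.
have Ha : H a = set0 by apply: h3; rewrite /V in_setD1 eqxx.
have Hs' : forall v, a \notin plus H v.
  by move=> v; rewrite /plus /pa0 ffunE; case: eqP => _; [apply: a_nc1 | apply: HaV].
rewrite (@dsep_sink _ pa0 pa1 a) //; first last.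
- exact: a_nc1.
- by rewrite /plus /pa0 ffunE eqxx.
- by move=> w wa; rewrite /plus /pa0 ffunE (negPf wa).
rewrite (hme x y Z xX yX xy sZ').
rewrite -(@dsep_sink _ H (plus H) a) //.
by move=> w wa; rewrite /plus /pa0 ffunE (negPf wa).
Qed.

Lemma part2 : exists pa0, is_dag k V pa0 /\
     (forall pa, is_dag k V pa -> score P X V pa <= score P X V pa0) /\
     (forall pa, is_dag k V pa -> ~ markov_equiv V pa0 pa ->
        score P X V pa < score P X V pa0 - gamma).
Proof.
exists pa0; split; first exact: dag_pa0.
split.
  move=> H dH; have := opt1 (dag_plus dH).
  by rewrite -plus_pa0 !score_plus lerD2r.
move=> H dH nme.
case: (classic (markov_equiv X1 pa1 (plus H))) => hme.
  by case: nme; apply: meq_plus.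
have := gap1 (dag_plus dH) hme.
rewrite -plus_pa0 !score_plus => h; move: h gb; set s1 := score P X V H; set s2 := score P X V pa0; set c := condH P X a (pa1 a) => h g. lra.
Qed.

End Part2.

Lemma connect_step (V : finType) (e : rel V) x y : connect e x y -> x != y ->
  exists z, e x z /\ connect e z y.
Proof.
case/connectP => [[|z p]] /=; first by move=> _ ->; rewrite eqxx.
case/andP => exz pz ly _; exists z; split => //.
by apply/connectP; exists p.
Qed.

Section Part1.
Variable R : realType.
Variables (Om : finType) (Var : finType) (T : eqType).
Variables (P : Om -> R) (X : Var -> Om -> T).
Hypothesis hP : is_pmf P.
Variables (k : nat) (a b : Var) (lam : R).
Let X1 := [set: Var] :\ b.
Let V := X1 :\ a.
Hypotheses (aX1 : a \in X1) (hba : condH P X b [set a] <= lam)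
  (hab : condH P X a [set b] <= lam) (lam0 : 0 < lam).
Variable (pa : {ffun Var -> {set Var}}).
Hypothesis (dag : is_dag k setT pa).

Let e := parent_rel pa.

Lemma ab : a != b.
Proof. by move: aX1; rewrite in_setD1 => /andP []. Qed.

Lemma p1 v u : u \in pa v -> u != v.
Proof. by case: dag => h1 _ _ _ hu; have := subsetP (h1 v (in_setT v)) u hu; rewrite in_setD1 => /andP []. Qed.

Lemma p2 v : (#|pa v| <= k)%N.
Proof. by case: dag => _ h2 _ _; apply: h2; apply: in_setT. Qed.

Lemma p4 u v : u \in pa v -> ~~ connect e v u.
Proof. by case: dag => _ _ _ h4; apply: h4. Qed.

Lemma sum_X1_split (f : Var -> R) : \sum_v f v = f b + \sum_(v in X1) f v.
Proof.
rewrite (bigD1 b) //=; congr (_ + _); apply: eq_bigl => v.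
by rewrite /X1 in_setD1 in_setT andbT.
Qed.

Definition G1 : {ffun Var -> {set Var}} :=
  [ffun v => if v == b then set0 else if b \in pa v then a |: (pa v :\ b) else pa v].

Definition G2 : {ffun Var -> {set Var}} :=
  [ffun v => if v == b then set0 else if v == a then pa b else
     if (a \in pa v) || (b \in pa v) then a |: (pa v :\ a :\ b) else pa v].

Lemma inX1 v : (v \in X1) = (v != b).
Proof. by rewrite /X1 in_setD1 in_setT andbT. Qed.

Lemma sum_cost (G : {ffun Var -> {set Var}}) (g : Var -> R) :
  (forall v, v \in X1 -> condH P X v (G v) <= g v + lam) ->
  \sum_(v in X1) g v <= \sum_v condH P X v (pa v) ->
  \sum_(v in X1) condH P X v (G v) <= \sum_v condH P X v (pa v) + #|X1|%:R * lam.
Proof.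
move=> hc hg; apply: (@le_trans _ _ (\sum_(v in X1) (g v + lam))).
  by apply: ler_sum => v vX; apply: hc.
by rewrite big_split /= sumr_const mulr_natl lerD2r.
Qed.

Section M1.
Hypothesis hnc : ~~ connect e b a.

Lemma bna : b \notin pa a.
Proof. by apply/negP => h; case/negP: hnc; apply: connect1. Qed.

Lemma G1_edge x y : x \in G1 y -> (x \in pa y) \/ (x = a /\ b \in pa y).
Proof.
rewrite /G1 ffunE; case: eqP => _; first by rewrite inE.
case: ifP => hb; last by left.
by rewrite in_setU1 => /orP [/eqP ->|/setD1P [_ h]]; [right|left].
Qed.

Lemma G1_dag : is_dag k X1 G1.
Proof.
split.
- move=> v; rewrite inX1 => vb; rewrite /G1 ffunE (negPf vb).
  apply/subsetP => u; case: ifP => hb.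
    rewrite in_setU1 => /orP [/eqP ->|/setD1P [ub hu]].
      rewrite in_setD1 inX1 ab andbT; apply/eqP => av; subst v.
      by move: bna; rewrite hb.
    by rewrite in_setD1 inX1 ub (p1 hu).
  move=> hu; rewrite in_setD1 inX1 (p1 hu) /=.
  by apply/eqP => ub; subst u; rewrite hu in hb.
- move=> v; rewrite inX1 => vb; rewrite /G1 ffunE (negPf vb).
  case: ifP => hb; last exact: p2.
  have := p2 v; rewrite (cardsD1 b (pa v)) hb cardsU1.
  by case: (a \notin _) => /=; lia.
- by move=> v; rewrite inX1 negbK => /eqP ->; rewrite /G1 ffunE eqxx.
- move=> u v hu; apply/negP => cvu.
  have L : forall x y, connect (parent_rel G1) x y -> connect e x y \/ connect e b y.
    move=> x y; apply: conn_or.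
      by move=> x' y' /G1_edge [h|[_ h]]; [left|right; apply: connect1].
    by move=> x' y' h1 h2; apply: connect_trans h1 (connect1 h2).
  have L2 : forall x y, connect e b x -> connect (parent_rel G1) x y -> connect e x y.
    move=> x y Qx; apply: conn_sub_Q Qx.
      move=> x' y' Qx' /G1_edge [h|[xa _]] //.
      by subst x'; move: hnc; rewrite Qx'.
    by move=> x' y' h1 h2; apply: connect_trans h1 (connect1 h2).
  case: (G1_edge hu) => [euv|[ua hbv]].
    case: (boolP (connect e b v)) => Qv.
      by have := L2 _ _ Qv cvu; apply/negP; apply: p4.
    case: (L _ _ cvu) => [c|Qu]; first by move: c; apply/negP; apply: p4.
    by case/negP: Qv; apply: connect_trans Qu (connect1 euv).
  subst u; have := L2 _ _ (connect1 hbv) cvu => c.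
  by case/negP: hnc; apply: connect_trans (connect1 hbv) c.
Qed.

Lemma G1_cost v : v \in X1 -> condH P X v (G1 v) <= condH P X v (pa v) + lam.
Proof.
rewrite inX1 => vb; rewrite /G1 ffunE (negPf vb); case: ifP => hb.
  have h1 := @E0 R Om Var T P X hP v a b _ (setU11 a (pa v :\ b)).
  have h2 : condH P X v (b |: (a |: (pa v :\ b))) <= condH P X v (pa v).
    apply: CR => //; apply/subsetP => u hu; rewrite !inE.
    by case: (eqVneq u b) => //= ub; rewrite hu orbT.
  exact: le_trans h1 (lerD h2 hba).
by rewrite lerDl ltW.
Qed.

Lemma merge1 : exists G, is_dag k X1 G /\
  (\sum_(v in X1) condH P X v (G v) <= \sum_v condH P X v (pa v) + #|X1|%:R * lam) /\
  (forall v, v \in V -> (a \in pa v) || (b \in pa v) -> a \in G v).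
Proof.
exists G1; split; first exact: G1_dag.
split.
  apply: (@sum_cost G1 (fun v => condH P X v (pa v))); first exact: G1_cost.
  by rewrite sum_X1_split lerDr condH_ge0.
move=> v; rewrite /V in_setD1 inX1 => /andP [va vb] h.
rewrite /G1 ffunE (negPf vb); case: ifP => hb; first exact: setU11.
by move: h; rewrite hb orbF.
Qed.

End M1.

Section M2.
Hypothesis hc : connect e b a.

Lemma anb : a \notin pa b.
Proof. by apply/negP => h; move: (p4 h); rewrite hc. Qed.

Definition psi v := if v == a then b else v.

Lemma G2_edge x y : x \in G2 y -> exists z, e (psi x) z /\ connect e z (psi y).
Proof.
rewrite /G2 ffunE; case: eqP => _; first by rewrite inE.
rewrite /psi; case: (eqVneq y a) => [ya|ya].
  move=> hx; have xa : x != a by apply/eqP => xa; subst x; move: anb; rewrite hx.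
  by rewrite (negPf xa); exists b; split => //; apply: connect0.
case: ifP => h.
  rewrite in_setU1 => /orP [/eqP ->|/setD1P [xb /setD1P [xa hx]]]; last first.
    by rewrite (negPf xa); exists y; split => //; apply: connect0.
  rewrite eqxx; case: (boolP (a \in pa y)) => hay.
    have ba : b != a by rewrite eq_sym ab.
    have [z [ebz cza]] := connect_step hc ba.
    by exists z; split => //; apply: connect_trans cza (connect1 hay).
  by move: h; rewrite (negPf hay) /= => hby; exists y; split => //; apply: connect0.
move=> hx; have xa : x != a by apply/eqP => xa; subst x; rewrite hx in h.
by rewrite (negPf xa); exists y; split => //; apply: connect0.
Qed.

Lemma G2_dag : is_dag k X1 G2.
Proof.
split.
- move=> v; rewrite inX1 => vb; rewrite /G2 ffunE (negPf vb).
  apply/subsetP => u; case: (eqVneq v a) => [->|va].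
    move=> hu; rewrite in_setD1 inX1 (p1 hu) andbT.
    by apply/eqP => ua; subst u; move: anb; rewrite hu.
  case: ifP => h.
    rewrite in_setU1 => /orP [/eqP ->|/setD1P [ub /setD1P [ua hu]]].
      by rewrite in_setD1 inX1 ab andbT eq_sym va.
    by rewrite in_setD1 inX1 ub (p1 hu).
  move=> hu; rewrite in_setD1 inX1 (p1 hu) /=.
  by apply/eqP => ub; subst u; rewrite hu orbT in h.
- move=> v; rewrite inX1 => vb; rewrite /G2 ffunE (negPf vb).
  case: (eqVneq v a) => [_|va]; first exact: p2.
  case: ifP => h; last exact: p2.
  have := p2 v; rewrite cardsU1.
  have : (#|pa v :\ a :\ b| < #|pa v|)%N.
    case/orP: h => h.
      rewrite (cardsD1 a (pa v)) h add1n ltnS; apply: subset_leq_card; apply: subD1set.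
    rewrite (cardsD1 b (pa v)) h add1n ltnS; apply: subset_leq_card.
    by apply/subsetP => u; rewrite !in_setD1 => /andP [-> /andP [_ ->]].
  by case: (a \notin _) => /=; lia.
- by move=> v; rewrite inX1 negbK => /eqP ->; rewrite /G2 ffunE eqxx.
- move=> u v hu; apply/negP => cvu.
  have cm : connect e (psi v) (psi u).
    apply: (conn_map _ cvu) => x y /G2_edge [z [ez cz]].
    by apply: connect_trans (connect1 ez) cz.
  have [z [ez cz]] := G2_edge hu.
  by move: (p4 ez); rewrite (connect_trans cz cm).
Qed.

Lemma G2_cost v : v \in X1 ->
  condH P X v (G2 v) <= (if v == a then condH P X b (pa b) else condH P X v (pa v)) + lam.
Proof.
rewrite inX1 => vb; rewrite /G2 ffunE (negPf vb); case: (eqVneq v a) => [->|va].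
  by have := @Ea R Om Var T P X hP a b (pa b); move=> h; apply: le_trans h _; rewrite lerD2l.
case: ifP => h.
  have h1 := @E0 R Om Var T P X hP v a b _ (setU11 a (pa v :\ a :\ b)).
  have h2 : condH P X v (b |: (a |: (pa v :\ a :\ b))) <= condH P X v (pa v).
    apply: CR => //; apply/subsetP => u hu; rewrite !inE.
    by case: (eqVneq u b) => //= ub; case: (eqVneq u a) => //= ua; rewrite hu.
  exact: le_trans h1 (lerD h2 hba).
by rewrite lerDl ltW.
Qed.

Lemma merge2 : exists G, is_dag k X1 G /\
  (\sum_(v in X1) condH P X v (G v) <= \sum_v condH P X v (pa v) + #|X1|%:R * lam) /\
  (forall v, v \in V -> (a \in pa v) || (b \in pa v) -> a \in G v).
Proof.
exists G2; split; first exact: G2_dag.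
split.
  apply: (@sum_cost G2 (fun v => if v == a then condH P X b (pa b) else condH P X v (pa v)));
    first exact: G2_cost.
  rewrite sum_X1_split (bigD1 a aX1) /= eqxx [in X in _ <= X](bigD1 a aX1) /=.
  rewrite lerD2l; apply: (@le_trans _ _ (\sum_(i in X1 | i != a) condH P X i (pa i))).
    by apply: ler_sum => v /andP [_ va]; rewrite (negPf va).
  by rewrite lerDr condH_ge0.
move=> v; rewrite /V in_setD1 inX1 => /andP [va vb] h.
by rewrite /G2 ffunE (negPf vb) (negPf va) h; apply: setU11.
Qed.

End M2.

Lemma merge_exists : exists G, is_dag k X1 G /\
  (\sum_(v in X1) condH P X v (G v) <= \sum_v condH P X v (pa v) + #|X1|%:R * lam) /\
  (forall v, v \in V -> (a \in pa v) || (b \in pa v) -> a \in G v).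
Proof.
case: (boolP (connect e b a)) => h; [exact: merge2 | exact: merge1].
Qed.
End Part1.

Section Part1b.
Variable R : realType.
Variables (Om : finType) (Var : finType) (T : eqType).
Variables (P : Om -> R) (X : Var -> Om -> T).
Hypothesis hP : is_pmf P.
Variables (k : nat) (a b : Var) (lam beta gamma : R) (pa1 : {ffun Var -> {set Var}}).
Let X1 := [set: Var] :\ b.
Let V := X1 :\ a.
Hypotheses (k0 : (0 < k)%N) (aX1 : a \in X1) (hba : condH P X b [set a] <= lam)
  (hab : condH P X a [set b] <= lam) (lam0 : 0 < lam)
  (dag1 : is_dag k X1 pa1)
  (gap1 : forall pa, is_dag k X1 pa -> ~ markov_equiv X1 pa1 pa ->
        score P X X1 pa <= score P X X1 pa1 - beta)
  (nochild : forall pa, is_dag k X1 pa -> markov_equiv X1 pa1 pa ->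
        forall v, a \notin pa v)
  (hgam : gamma <= beta - 3 * #|Var|%:R * lam).

Definition pplus : {ffun Var -> {set Var}} := [ffun v => if v == b then [set a] else pa1 v].

Lemma bX1 : b \notin X1.
Proof. by rewrite /X1 in_setD1 eqxx. Qed.

Lemma ab' : a != b.
Proof. by move: aX1; rewrite in_setD1 => /andP []. Qed.

Lemma dag_pplus : is_dag k setT pplus.
Proof.
case: dag1 => d1 d2 d3 d4.
have b_nin : forall v, b \notin pa1 v.
  move=> v; case: (boolP (v \in X1)) => vX; last by rewrite d3 // inE.
  by apply/negP => /(subsetP (d1 v vX)); rewrite in_setD1 => /andP [_]; rewrite (negPf bX1).
have Hs' : forall v, ~~ parent_rel pplus b v.
  move=> v; rewrite /parent_rel /= /pplus ffunE; case: (eqVneq v b) => [_|_].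
    by rewrite inE eq_sym ab'.
  exact: b_nin.
split.
- move=> v _; rewrite /pplus ffunE; case: (eqVneq v b) => [->|vb].
    by rewrite sub1set in_setD1 ab' in_setT.
  have vX : v \in X1 by rewrite /X1 in_setD1 vb in_setT.
  apply: subset_trans (d1 v vX) _; apply: setSD; apply: subsetT.
- move=> v _; rewrite /pplus ffunE; case: (eqVneq v b) => [_|vb]; first by rewrite cards1.
  by apply: d2; rewrite /X1 in_setD1 vb in_setT.
- by move=> v; rewrite in_setT.
- move=> u v; rewrite /pplus ffunE; case: (eqVneq v b) => [->|vb].
    rewrite inE => /eqP ->; apply/negP => /(conn_from_sink Hs') /eqP.
    by rewrite (negPf ab').
  move=> hu; have ub : u != b by apply/eqP => ub; subst u; rewrite (negPf (b_nin v)) in hu.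
  rewrite -(@conn_pa _ pa1 pplus b) //; first exact: d4.
  + by move=> w wb; rewrite /pplus ffunE (negPf wb).
  + by apply: d3; apply: bX1.
Qed.

Lemma score_pplus : score P X setT pplus = score P X X1 pa1 - condH P X b [set a].
Proof.
rewrite /score (bigD1 b) ?in_setT //= /pplus ffunE eqxx.
have -> : \sum_(i in [set: Var] | i != b)
    condH P X i ((finfun (fun v => if v == b then [set a] else pa1 v)) i) =
    \sum_(v in X1) condH P X v (pa1 v).
  apply: eq_big => v; first by rewrite /X1 in_setD1 andbC.
  by move=> /andP [_ vb]; rewrite ffunE (negPf vb).
by rewrite opprD addrC.
Qed.

Lemma part1 : forall pa, is_dag k setT pa ->
  (forall pa', is_dag k setT pa' -> score P X setT pa' - gamma <= score P X setT pa) ->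
  forall v, v \in V -> pa v \subset V.
Proof.
move=> pa dag nopt.
have hnear := nopt _ dag_pplus; rewrite score_pplus in hnear.
have [G [dG [hsum hG]]] := merge_exists hP aX1 hba hab lam0 dag.
have hme : markov_equiv X1 pa1 G.
  apply: NNPP => nme; have := gap1 dG nme.
  have hsc : score P X setT pa = - \sum_v condH P X v (pa v).
    by rewrite /score; congr (- _); apply: eq_bigl => v; rewrite in_setT.
  rewrite hsc in hnear; rewrite {1}/score.
  have hgam' := hgam.
  have hcard : #|Var| = (#|X1|).+1 by rewrite -cardsT (cardsD1 b) in_setT.
  set n := #|X1|%:R in hsum; set dd := #|Var|%:R in hgam'.
  have hn : n <= dd - 1.
    by rewrite /n /dd hcard -addn1 natrD addrK.
  have hd : 1 <= dd by rewrite /dd ler1n; apply/card_gt0P; exists a.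
  have h1 : n * lam <= dd * lam - lam.
    by rewrite -[X in _ <= _ - X]mul1r -mulrBl; apply: ler_wpM2r => //; apply: ltW.
  have h2 : lam <= dd * lam by rewrite -[X in X <= _]mul1r; apply: ler_wpM2r => //; apply: ltW.
  move: hgam'; rewrite -mulrA => hg.
  have hab' := hab; have hba' := hba; have lam0' := lam0.
  move: hsum hnear h1 h2 hg hab' hba' lam0'.
  set s1 := \sum_(v in X1) _; set s2 := \sum_v _; set sc := score _ _ _ pa1.
  set c1 := condH _ _ b _; set c2 := condH _ _ a _; set m1 := n * lam; set m2 := dd * lam.
  move=> *; lra.
move=> v vV; apply/subsetP => u hu.
have va : v != a by move: vV; rewrite /V in_setD1 => /andP [].
have nab := nochild dG hme v.
have uv : u != v.
  case: dag => h1 _ _ _; have := subsetP (h1 v (in_setT v)) u hu.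
  by rewrite in_setD1 => /andP [].
have : ~~ ((a \in pa v) || (b \in pa v)).
  by apply/negP => /(hG v vV); rewrite (negPf nab).
rewrite negb_or => /andP [nav nbv].
rewrite /V /X1 !in_setD1 in_setT andbT; apply/andP; split.
  by apply/eqP => ua; subst u; rewrite hu in nav.
by apply/eqP => ub; subst u; rewrite hu in nbv.
Qed.

End Part1b.

Theorem theorem4 (R : realType) (Om Var : finType) (T : eqType)
  (k : nat) (P : Om -> R) (X : Var -> Om -> T) (C : Om -> bool)
  (a b : Var) (alpha beta lambda gamma : R) :
  let X1 := [set: Var] :\ b in
  let d := #|Var| in
  (0 < k)%N ->
  is_pmf P ->
  a \in X1 ->
  (k <= #|X1|)%N ->
  0 < alpha -> 0 < beta ->
  (exists pa1, is_dag k X1 pa1 /\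
     (forall pa, is_dag k X1 pa -> score P X X1 pa <= score P X X1 pa1) /\
     (forall pa, is_dag k X1 pa -> ~ markov_equiv X1 pa1 pa ->
        score P X X1 pa <= score P X X1 pa1 - beta) /\
     (forall pa, is_dag k X1 pa -> markov_equiv X1 pa1 pa ->
        forall v, a \notin pa v)) ->
  condH P X a (X1 :\ a) = alpha ->
  0 < lambda -> lambda < alpha -> lambda < beta / (3 * d%:R) ->
  (forall (c : bool) (w : Om),
     Pr P (fun w' => (C w' == c) && agree X X1 w w') =
     Pr P (fun w' => C w' == c) * Pr P (agree X X1 w)) ->
  Pr P (fun w' => C w' && (X b w' == X a w')) = Pr P C ->
  (forall w : Om,
     Pr P (fun w' => ~~ C w' && (X b w' == X b w) && agree X X1 w w')
       * Pr P (fun w' => ~~ C w') =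
     Pr P (fun w' => ~~ C w' && (X b w' == X b w))
       * Pr P (fun w' => ~~ C w' && agree X X1 w w')) ->
  Num.max (condH P X b [set a]) (condH P X a [set b]) = lambda ->
  0 < gamma -> gamma <= beta - 3 * d%:R * lambda ->
  stable k P X gamma (X1 :\ a).
Proof.
move=> X1 d hk hP aX1 _ _ _ [pa1 [dag1 [opt1 [gap1 nochild]]]] _ lam0 _ _ _ _ _ hmax _ hgam.
have hba : condH P X b [set a] <= lambda by rewrite -hmax le_max lexx.
have hab : condH P X a [set b] <= lambda by rewrite -hmax le_max lexx orbT.
split.
  exact: (part1 hP hk aX1 hba hab lam0 dag1 gap1 nochild hgam).
have gb : gamma < beta.
  apply: le_lt_trans hgam _; rewrite ltrBlDr ltrDl; apply: mulr_gt0 => //.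
  by rewrite mulr_gt0 // ltr0n; apply/card_gt0P; exists a.
exact: (part2 aX1 dag1 opt1 gap1 nochild gb).
Qed.
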